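(* Let $\langle\mathcal{X},\mathsf{cap}\rangle$ be a $\textsf{VCh}$ instance with $\mathcal{X}=\langle\mathsf{S},\mathsf{po}\rangle$, and let $G_{\mathsf{frontier}}$ be its frontier graph. Then $\langle\mathcal{X},\mathsf{cap}\rangle$ is consistent if and only if some sink node of $G_{\mathsf{frontier}}$ is reachable from the source node.
   Context: Channels and events. Each channel $\mathtt{ch}$ has a capacity $\mathsf{cap}(\mathtt{ch})\in\mathbb{N}$; $\mathtt{ch}$ is synchronous if $\mathsf{cap}(\mathtt{ch})=0$ and asynchronous otherwise. An event is a tuple $e=\langle id,\tau,\mathsf{op}(\mathtt{ch},\mathsf{val})\rangle$ with a unique identifier $id$, a thread $\tau$, an operation $\mathsf{op}\in\{\mathtt{snd},\mathtt{rcv}\}$, a channel $\mathtt{ch}$ and a value $\mathsf{val}$. An execution is a finite sequence $\sigma$ of distinct events. $\sigma$ is well-formed (w.r.t. $\mathsf{cap}$) if: (i) for every asynchronous $\mathtt{ch}$ and every prefix $\pi$ of $\sigma$, $R_\pi(\mathtt{ch})\le S_\pi(\mathtt{ch})\le R_\pi(\mathtt{ch})+\mathsf{cap}(\mathtt{ch})$, where $S_\pi(\mathtt{ch})$, $R_\pi(\mathtt{ch})$ are the numbers of send, resp. receive, events on $\mathtt{ch}$ in $\pi$; (ii) for every synchronous $\mathtt{ch}$, every send on $\mathtt{ch}$ is immediately followed in $\sigma$ by a receive on $\mathtt{ch}$ of a different thread, and every receive on $\mathtt{ch}$ is immediately preceded in $\sigma$ by a send on $\mathtt{ch}$ of a different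 thread; (iii) for every channel $\mathtt{ch}$ and every $i$, if $\sigma$ contains an $i$-th receive on $\mathtt{ch}$, then the $i$-th send on $\mathtt{ch}$ has the same value as it. The program order $\mathsf{po}_\sigma$ is the set of pairs $(e,f)$ with $e$ before $f$ in $\sigma$ and in the same thread. An abstract execution is $\mathcal{X}=\langle \mathsf{S},\mathsf{po}\rangle$ where $\mathsf{S}$ is a finite set of events and $\mathsf{po}$ is a strict order that totally orders the events of each thread and relates no events of different threads. Given a capacity function $\mathsf{cap}$ on the channels occurring in $\mathsf{S}$, an execution $\sigma$ concretizes $\langle\mathcal{X},\mathsf{cap}\rangle$ if its set of events is $\mathsf{S}$, $\mathsf{po}_\sigma=\mathsf{po}$ and $\sigma$ is well-formed; $\langle\mathcal{X},\mathsf{cap}\rangle$ is consistent if it has a concretization. Frontier graph. For $Y\subseteq\mathsf{S}$ let $\#^{Y}_{\mathtt{snd}}(\mathtt{ch})$, $\#^{Y}_{\mathtt{rcv}}(\mathtt{ch})$ be the numbers of send, resp. receive, events on $\mathtt{ch}$ in $Y$. The nodes of $G_{\mathsf{frontier}}$ are triples $\langle Y,Q,I\rangle$ such that: (1) $Y\subseteq\mathsf{S}$ is downward closed under $\mathsf{po}$; for all synchronous channels $\mathtt{ch}$, $\#^{Y}_{\mathtt{rcv}}(\mathtt{ch})=\#^{Y}_{\mathtt{snd}}(\mathtt{ch})$ except for at most one synchronous channel, for which $\#^{Y}_{\mathtt{rcv}}(\mathtt{ch})=\#^{Y}_{\mathtt{snd}}(\mathtt{ch})-1$; and for every asynchronous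 $\mathtt{ch}$, $\#^{Y}_{\mathtt{rcv}}(\mathtt{ch})\le\#^{Y}_{\mathtt{snd}}(\mathtt{ch})\le\#^{Y}_{\mathtt{rcv}}(\mathtt{ch})+\mathsf{cap}(\mathtt{ch})$; (2) $Q$ maps each asynchronous channel $\mathtt{ch}$ to a sequence of events of $Y$ of length at most $\mathsf{cap}(\mathtt{ch})$, such that each event $e$ occurring in $Q(\mathtt{ch})$ is one of the last $|Q(\mathtt{ch})|$ send events on $\mathtt{ch}$ of the thread of $e$; (3) $I$ is $\bot$ if all synchronous channels satisfy $\#^{Y}_{\mathtt{rcv}}=\#^{Y}_{\mathtt{snd}}$, and otherwise $I$ is a send event on the (unique) synchronous channel $\mathtt{ch}$ with $\#^{Y}_{\mathtt{rcv}}(\mathtt{ch})=\#^{Y}_{\mathtt{snd}}(\mathtt{ch})-1$. The source node is $\langle\emptyset,\lambda\mathtt{ch}.\epsilon,\bot\rangle$; the sink nodes are all nodes of the form $\langle\mathsf{S},Q,\bot\rangle$. There is an edge $\langle Y_1,Q_1,I_1\rangle\to\langle Y_2,Q_2,I_2\rangle$ iff there is $e\in\mathsf{S}\setminus Y_1$ with $Y_2=Y_1\cup\{e\}$, and, letting $\mathtt{ch}$ be the channel of $e$: (a) if $\mathtt{ch}$ is asynchronous and $e$ is a receive: $I_1=I_2=\bot$, $Q_1(\mathtt{ch})$ is nonempty, its first event has the same value as $e$, $Q_1(\mathtt{ch})=f\cdot Q_2(\mathtt{ch})$ for that first event $f$, and $Q_2(\mathtt{ch}')=Q_1(\mathtt{ch}')$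 for all other asynchronous $\mathtt{ch}'$; (b) if $\mathtt{ch}$ is asynchronous and $e$ is a send: $I_1=I_2=\bot$, $|Q_1(\mathtt{ch})|<\mathsf{cap}(\mathtt{ch})$, $Q_2(\mathtt{ch})=Q_1(\mathtt{ch})\cdot e$, and $Q_2(\mathtt{ch}')=Q_1(\mathtt{ch}')$ for all other asynchronous $\mathtt{ch}'$; (c) if $\mathtt{ch}$ is synchronous and $e$ is a send: $I_1=\bot$, $I_2=e$, and $Q_1=Q_2$; (d) if $\mathtt{ch}$ is synchronous and $e$ is a receive: $I_1=e'\neq\bot$ where $e'$ is a send on $\mathtt{ch}$ with the same value as $e$ and a thread different from that of $e$, $I_2=\bot$, and $Q_1=Q_2$. *)

(* Defs.v *)
From HB Require Import structures.
From mathcomp Require Import all_boot.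
Set Implicit Arguments. Unset Strict Implicit. Unset Printing Implicit Defensive.

Inductive op := Snd | Rcv.
Definition op_eqb (a b : op) : bool :=
  match a, b with Snd, Snd | Rcv, Rcv => true | _, _ => false end.
Lemma op_eqP : Equality.axiom op_eqb.
Proof. by case; case; constructor. Qed.
HB.instance Definition _ := hasDecEq.Build op op_eqP.

Record event (Th Ch V : Type) := Event {
  ev_id : nat; ev_thr : Th; ev_op : op; ev_ch : Ch; ev_val : V }.

Section EventEq.
Variables Th Ch V : eqType.
Definition ev_enc (e : event Th Ch V) :=
  (ev_id e, ev_thr e, ev_op e, ev_ch e, ev_val e).
Definition ev_dec (t : nat * Th * op * Ch * V) : event Th Ch V :=
  let: (i, t, o, c, v) := t in Event i t o c v.
Lemma ev_encK : cancel ev_enc ev_dec. Proof. by case. Qed.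
HB.instance Definition _ := Equality.copy (event Th Ch V) (can_type ev_encK).
End EventEq.

Section VCh.
Variables Th Ch V : eqType.
Notation event := (event Th Ch V).
Implicit Types (e f : event) (c : Ch) (cap : Ch -> nat) (po : rel event)
  (S s : seq event).

Definition is_snd_on c e : bool := (ev_op e == Snd) && (ev_ch e == c).
Definition is_rcv_on c e : bool := (ev_op e == Rcv) && (ev_ch e == c).

Definition sync cap c : bool := cap c == 0.
Definition async cap c : bool := 0 < cap c.

Definition wf_async cap s : Prop :=
  forall c, async cap c -> forall k,
    let pi := take k s in
    count (is_rcv_on c) pi <= count (is_snd_on c) pi <= count (is_rcv_on c) pi + cap c.

Definition wf_sync cap s : Prop :=
  forall c, sync cap c ->
  forall s1 e s2, s = s1 ++ e :: s2 ->
    (is_snd_on c e -> exists f s3, s2 = f :: s3 /\ is_rcv_on c f /\ ev_thr f != ev_thr e) /\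
    (is_rcv_on c e -> exists s0 f, s1 = rcons s0 f /\ is_snd_on c f /\ ev_thr f != ev_thr e).

Definition wf_values s : Prop :=
  forall c i er, onth (filter (is_rcv_on c) s) i = Some er ->
    exists es, onth (filter (is_snd_on c) s) i = Some es /\ ev_val es = ev_val er.

Definition well_formed cap s : Prop :=
  uniq s /\ wf_async cap s /\ wf_sync cap s /\ wf_values s.

Definition po_of s e f : bool :=
  [&& e \in s, f \in s, index e s < index f s & ev_thr e == ev_thr f].

Definition abstract_execution S po : Prop :=
  uniq S /\
  uniq (map (@ev_id _ _ _) S) /\
  (forall e f, po e f -> e \in S /\ f \in S) /\
  (forall e, ~~ po e e) /\
  (forall e f g, po e f -> po f g -> po e g) /\
  (forall e f, po e f -> ev_thr e = ev_thr f) /\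
  (forall e f, e \in S -> f \in S -> e != f -> ev_thr e = ev_thr f ->
     po e f \/ po f e).

Definition concretizes S po cap s : Prop :=
  (forall e, (e \in s) = (e \in S)) /\
  (forall e f, po_of s e f = po e f) /\
  well_formed cap s.

Definition consistent S po cap : Prop := exists s, concretizes S po cap s.

Record node := Node {
  nY : pred event;
  nQ : Ch -> seq event;       (* Q, meaningful on asynchronous channels *)
  nI : option event }.        (* I, with None standing for bottom *)

Definition cnt_snd S (Y : pred event) c := count (fun x => Y x && is_snd_on c x) S.
Definition cnt_rcv S (Y : pred event) c := count (fun x => Y x && is_rcv_on c x) S.

Definition is_node S po cap (n : node) : Prop :=
  let Y := nY n in let Q := nQ n in let I := nI n in
  (forall x, Y x -> x \in S) /\
  (forall e f, Y f -> po e f -> Y e) /\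
  (forall c1 c2, sync cap c1 -> sync cap c2 ->
     cnt_rcv S Y c1 <> cnt_snd S Y c1 -> cnt_rcv S Y c2 <> cnt_snd S Y c2 -> c1 = c2) /\
  (forall c, sync cap c ->
     cnt_rcv S Y c = cnt_snd S Y c \/ cnt_rcv S Y c = (cnt_snd S Y c).-1 /\ 0 < cnt_snd S Y c) /\
  (forall c, async cap c ->
     cnt_rcv S Y c <= cnt_snd S Y c <= cnt_rcv S Y c + cap c) /\
  (forall c, sync cap c -> Q c = [::]) /\
  (forall c, async cap c ->
     size (Q c) <= cap c /\
     forall e, e \in Q c ->
       [/\ Y e, is_snd_on c e &
           count (fun x => [&& Y x, is_snd_on c x, ev_thr x == ev_thr e & po e x]) S
             < size (Q c)]) /\
  (match I with
   | None => forall c, sync cap c -> cnt_rcv S Y c = cnt_snd S Y c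
   | Some i => exists c, [/\ sync cap c, cnt_rcv S Y c <> cnt_snd S Y c & is_snd_on c i]
   end).

Definition source : node := Node pred0 (fun _ => [::]) None.

Definition is_sink S (n : node) : Prop :=
  (forall x, nY n x = (x \in S)) /\ nI n = None.

Definition edge S cap (n1 n2 : node) : Prop :=
  exists e, [/\ e \in S, ~~ nY n1 e,
    (forall x, nY n2 x = nY n1 x || (x == e)) &
    let c := ev_ch e in
    let Q1 := nQ n1 in let Q2 := nQ n2 in
    let I1 := nI n1 in let I2 := nI n2 in
    match ev_op e with
    | Rcv =>
      if async cap c then
        [/\ I1 = None, I2 = None,
            (exists f, Q1 c = f :: Q2 c /\ ev_val f = ev_val e) &
            (forall c', async cap c' -> c' != c -> Q2 c' = Q1 c')]
      else
        (exists e', [/\ I1 = Some e', is_snd_on c e', ev_val e' = ev_val e &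
                        ev_thr e' != ev_thr e]) /\
        I2 = None /\ (forall c', Q1 c' = Q2 c')
    | Snd =>
      if async cap c then
        [/\ I1 = None, I2 = None, size (Q1 c) < cap c, Q2 c = rcons (Q1 c) e &
            (forall c', async cap c' -> c' != c -> Q2 c' = Q1 c')]
      else
        [/\ I1 = None, I2 = Some e & (forall c', Q1 c' = Q2 c')]
    end].

Inductive reachable S po cap : node -> Prop :=
| reach_src : is_node S po cap source -> reachable S po cap source
| reach_step n1 n2 : reachable S po cap n1 -> is_node S po cap n2 ->
    edge S cap n1 n2 -> reachable S po cap n2.

End VCh.

(* Main.v *)
Require Import Defs.
From HB Require Import structures.
From mathcomp Require Import all_boot zify.
Set Implicit Arguments. Unset Strict Implicit. Unset Printing Implicit Defensive.

Section Aux.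
Variables Th Ch V : eqType.
Local Notation E := (event Th Ch V).
Implicit Types (s p S : seq E) (c : Ch) (cap : Ch -> nat).

Lemma count_S (S p : seq E) (Y P : pred E) :
  uniq p -> uniq S -> {subset p <= S} -> Y =1 mem p ->
  count (fun x => Y x && P x) S = count P p.
Proof.
move=> up uS sub HY.
have pe : perm_eq p (filter (mem p) S).
  apply: uniq_perm => //; first exact: filter_uniq.
  move=> x; rewrite mem_filter; apply/idP/idP => [xp|/andP[]//]; apply/andP; split=> //; exact: sub.
rewrite (permP pe) count_filter; apply: eq_count => x /=.
by rewrite HY andbC.
Qed.

Lemma async_sync cap c : async cap c = ~~ sync cap c.
Proof. by rewrite /async /sync lt0n. Qed.

Lemma snd_ch c (e : E) : is_snd_on c e -> ev_ch e = c.
Proof. by case/andP=> _ /eqP. Qed.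
Lemma rcv_ch c (e : E) : is_rcv_on c e -> ev_ch e = c.
Proof. by case/andP=> _ /eqP. Qed.

Lemma rcons_decomp s (x : E) s1 e s2 : rcons s x = s1 ++ e :: s2 ->
  (s2 = [::] /\ s1 = s /\ e = x) \/ exists s2', s2 = rcons s2' x /\ s = s1 ++ e :: s2'.
Proof.
case/lastP: s2 => [|s2' y].
  by rewrite cats1 => /rcons_inj [-> ->]; left.
rewrite -rcons_cons -rcons_cat => /rcons_inj [-> ->]; right; by exists s2'.
Qed.

Definition Minv (s : seq E) (q : seq E) c :=
  exists M, filter (is_snd_on c) s = M ++ q /\ size M = count (is_rcv_on c) s /\
    forall j er, onth (filter (is_rcv_on c) s) j = Some er ->
      exists es, onth M j = Some es /\ ev_val es = ev_val er.

Lemma Minv_other s q c (e : E) : Minv s q c -> ~~ is_snd_on c e -> ~~ is_rcv_on c e ->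
  Minv (rcons s e) q c.
Proof.
case=> M [h1 [h2 h3]] ns nr; exists M.
rewrite !filter_rcons (negbTE ns) (negbTE nr) -cats1 count_cat /= (negbTE nr) addn0.
by rewrite addn0.
Qed.

Lemma Minv_snd s q c (e : E) : Minv s q c -> is_snd_on c e -> ~~ is_rcv_on c e ->
  Minv (rcons s e) (rcons q e) c.
Proof.
case=> M [h1 [h2 h3]] ns nr; exists M.
split; first by rewrite filter_rcons ns h1 rcons_cat.
split; first by rewrite h2 -cats1 count_cat /= (negbTE nr) !addn0.
by rewrite filter_rcons (negbTE nr).
Qed.

Lemma Minv_rcv s q c (e f : E) : Minv s (f :: q) c -> is_rcv_on c e -> ~~ is_snd_on c e ->
  ev_val f = ev_val e -> Minv (rcons s e) q c.
Proof.
case=> M [h1 [h2 h3]] nr ns hv; exists (rcons M f).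
split; first by rewrite filter_rcons (negbTE ns) h1 cat_rcons.
split; first by rewrite size_rcons h2 -cats1 count_cat /= nr addn0 addn1.
move=> j er; rewrite filter_rcons nr -cats1 onth_cat size_filter -h2.
case: ltnP => hj.
  move=> /h3 [es [h4 h5]]; exists es; split=> //.
  by rewrite -cats1 onth_cat hj.
case Ej: (j - size M) => [|k]; last by rewrite /= onth0n.
have ej : j = size M by apply/eqP; rewrite eqn_leq hj -subn_eq0 Ej.
rewrite /= => -[<-]; exists f; split=> //; rewrite ej.
by rewrite -cats1 onth_cat ltnn subnn.
Qed.

End Aux.

Section Back.
Variables Th Ch V : eqType.
Local Notation E := (event Th Ch V).
Local Notation node := (node Th Ch V).
Variables (S : seq E) (po : rel E) (cap : Ch -> nat).
Hypothesis AE : abstract_execution S po.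

Lemma edge_facts (n1 n2 : node) : edge S cap n1 n2 -> exists e,
  [/\ e \in S, ~~ nY n1 e, (forall x, nY n2 x = nY n1 x || (x == e)),
   nI n2 = (if (ev_op e == Snd) && sync cap (ev_ch e) then Some e else None) &
  [/\ (ev_op e = Rcv -> sync cap (ev_ch e) -> exists i, nI n1 = Some i),
      (forall i, nI n1 = Some i -> [/\ ev_op e = Rcv, sync cap (ev_ch e),
            is_snd_on (ev_ch e) i, ev_val i = ev_val e & ev_thr i != ev_thr e]) &
      (forall c, async cap c ->
        [/\ c != ev_ch e -> nQ n2 c = nQ n1 c,
            ev_op e = Snd -> c = ev_ch e -> nQ n2 c = rcons (nQ n1 c) e &
            ev_op e = Rcv -> c = ev_ch e -> exists f, nQ n1 c = f :: nQ n2 c /\ ev_val f = ev_val e])]].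
Proof.
case=> e [eS nY1 hY hcase]; exists e; split=> //; rewrite /= in hcase.
- move: hcase; case: (ev_op e) => /=; rewrite async_sync;
  case: (sync cap (ev_ch e)) => /=.
  + by case.
  + by case.
  + by case=> _ [].
  + by case.
split.
- move=> hop hs; move: hcase; rewrite hop async_sync hs /= => -[[e' [h1 _ _ _]] _].
  by exists e'.
- move=> i hi; move: hcase; case: (ev_op e) => /=; rewrite async_sync;
  case hs: (sync cap (ev_ch e)) => /=.
  + by case; rewrite hi.
  + by case; rewrite hi.
  + by case=> -[e' [h1 h2 h3 h4]] _; move: h1; rewrite hi => -[->].
  + by case; rewrite hi.
- move=> c hc; have hsc: sync cap c = false by move: hc; rewrite async_sync; case: sync.
  move: hcase; case hop: (ev_op e) => /=; rewrite async_sync;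
  case hs: (sync cap (ev_ch e)) => /=.
  + case=> _ _ h; split=> [cne|_ ce|//].
    * by rewrite h.
    * by rewrite ce hs in hsc.
  + case=> _ _ _ h4 h5; split=> [cne|_ ->//|//].
    by apply: h5.
  + case=> _ [_ h]; split=> [cne|//|_ ce].
    * by rewrite h.
    * by rewrite ce hs in hsc.
  + case=> _ _ h3 h4; split=> [cne|//|_ ->//].
    by apply: h4.
Qed.


Definition qf (n : node) c : seq E :=
  if async cap c then nQ n c else
  if nI n is Some i then (if is_snd_on c i then [:: i] else [::]) else [::].

Definition sync_pre (n : node) (s : seq E) := forall c, sync cap c ->
  forall s1 e s2, s = s1 ++ e :: s2 ->
  (is_snd_on c e -> (s2 = [::] /\ nI n = Some e) \/
      exists f s3, s2 = f :: s3 /\ is_rcv_on c f /\ ev_thr f != ev_thr e) /\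
  (is_rcv_on c e -> exists s0 f, s1 = rcons s0 f /\ is_snd_on c f /\ ev_thr f != ev_thr e).

Definition Inv (n : node) (s : seq E) :=
  [/\ uniq s, (forall x, nY n x = (x \in s)),
      (forall e f, e \in s -> f \in s -> po e f -> index e s < index f s),
      wf_async cap s &
      [/\ sync_pre n s, (forall i, nI n = Some i -> exists s0, s = rcons s0 i) &
          (forall c, Minv s (qf n c) c)]].

Lemma snd_op c (e : E) : is_snd_on c e -> ev_op e = Snd.
Proof. by case/andP=> /eqP. Qed.
Lemma rcv_op c (e : E) : is_rcv_on c e -> ev_op e = Rcv.
Proof. by case/andP=> /eqP. Qed.
Lemma snd_other c (e : E) : c != ev_ch e -> is_snd_on c e = false.
Proof. by move=> ne; apply/negbTE/negP => /snd_ch h; rewrite h eqxx in ne. Qed.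
Lemma rcv_other c (e : E) : c != ev_ch e -> is_rcv_on c e = false.
Proof. by move=> ne; apply/negbTE/negP => /rcv_ch h; rewrite h eqxx in ne. Qed.

Lemma step_inv n1 n2 s : is_node S po cap n1 -> is_node S po cap n2 ->
  edge S cap n1 n2 -> Inv n1 s -> exists s', Inv n2 s'.
Proof.
move=> hn1 hn2 /edge_facts [e [eS nY1 hY hI2 [hI1a hI1b hQ]]].
case=> us hYs hidx was [sp hIs hM].
case: hn1 => Ysub1 [down1 _].
case: hn2 => Ysub2 [_ [_ [_ [asy2 _]]]].
have hY2 x : nY n2 x = (x \in rcons s e) by rewrite hY hYs mem_rcons in_cons orbC.
have es : e \notin s by rewrite -hYs.
have us' : uniq (rcons s e) by rewrite rcons_uniq es us.
have I1N : ~~ ((ev_op e == Rcv) && sync cap (ev_ch e)) -> nI n1 = None.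
  move=> h; case E1: (nI n1) => [i|] //.
  by case: (hI1b i E1) => -> -> _ _ _ in h.
exists (rcons s e); split=> //.
- move=> x y; rewrite -!cats1 !index_cat !mem_cat !inE.
  case xs: (x \in s); case ys: (y \in s) => //= hx hy hxy.
  + exact: hidx.
  + by move/eqP: hy => ->; rewrite eqxx addn0 index_mem.
  + move/eqP: hx => hx; subst x.
    by move: nY1; rewrite (down1 e y) // hYs.
  + move/eqP: hx => hx; move/eqP: hy => hy; subst x y.
    by case: AE => _ [_ [_ [irr _]]]; move: (irr e); rewrite hxy.
- move=> c hc k /=.
  have sub : {subset rcons s e <= S} by move=> x; rewrite -hY2; apply: Ysub2.
  case: (leqP k (size s)) => hk.
    by rewrite -cats1 takel_cat //; apply: was.
  rewrite take_oversize; last by rewrite size_rcons.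
  have := asy2 c hc; rewrite /cnt_rcv /cnt_snd.
  have uS : uniq S by case: AE.
  by rewrite !(@count_S _ _ _ S (rcons s e) (nY n2)).
split.
- move=> c hc s1 x s2 /rcons_decomp [[-> [-> ->]]|[s2' [-> hs]]].
  + split.
    * move=> hsn; left; split=> //; rewrite hI2.
      by rewrite (snd_op hsn) (snd_ch hsn) hc.
    * move=> hr; have hse : sync cap (ev_ch e) by rewrite (rcv_ch hr).
      have [i hi] := hI1a (rcv_op hr) hse.
      case: (hI1b i hi) => _ _ h1 _ h2; case: (hIs i hi) => s0 ->.
      by exists s0, i; rewrite -(rcv_ch hr).
  + have [h1 h2] := sp c hc s1 x s2' hs; split=> //.
    move=> hsn; case: (h1 hsn) => [[-> hi]|[f [s3 [-> hf]]]]; right.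
    * case: (hI1b x hi) => hop _ h3 _ h4; exists e, [::]; split=> //.
      have ce : ev_ch e = c by rewrite -(snd_ch h3) (snd_ch hsn).
      split; first by rewrite /is_rcv_on hop ce !eqxx.
      by rewrite eq_sym.
    * by exists f, (rcons s3 e).
- move=> i; rewrite hI2; case: ifP => // _ [<-]; by exists s.
move=> c; rewrite /qf; case hac: (async cap c).
  case: (hQ c hac) => q1 q2 q3.
  case: (eqVneq c (ev_ch e)) => [ce|cne].
    case hop: (ev_op e).
    * rewrite (q2 hop ce); apply: Minv_snd; first by move: (hM c); rewrite /qf hac.
      - by rewrite /is_snd_on hop ce !eqxx.
      - by rewrite /is_rcv_on hop.
    * have [f [hf hv]] := q3 hop ce; apply: (@Minv_rcv _ _ _ _ _ _ _ f) => //.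
      - by move: (hM c); rewrite /qf hac hf.
      - by rewrite /is_rcv_on hop ce !eqxx.
      - by rewrite /is_snd_on hop.
  rewrite (q1 cne); move: (hM c); rewrite /qf hac => h.
  by apply: Minv_other; rewrite ?snd_other ?rcv_other.
have hsc : sync cap c by move: hac; rewrite async_sync; case: sync.
case hse: (sync cap (ev_ch e)); last first.
  rewrite hI2 hse andbF; move: (hM c); rewrite /qf hac I1N ?hse ?andbF // => h.
  have cne : c != ev_ch e by apply/eqP => ce; rewrite -ce hsc in hse.
  by apply: Minv_other; rewrite ?snd_other ?rcv_other.
case hop: (ev_op e).
  rewrite hI2 hop hse /=; move: (hM c); rewrite /qf hac I1N ?hop // => h.
  case: (eqVneq c (ev_ch e)) => [ce|cne].
    have hs1 : is_snd_on c e by rewrite /is_snd_on hop ce !eqxx.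
    rewrite hs1; apply: (Minv_snd h hs1).
    by rewrite /is_rcv_on hop.
  by rewrite snd_other //; apply: Minv_other; rewrite ?snd_other ?rcv_other.
have [i hi] := hI1a hop hse; case: (hI1b i hi) => _ _ h3 h4 _.
rewrite hI2 hop /=; move: (hM c); rewrite /qf hac hi => h.
case: (eqVneq c (ev_ch e)) => [ce|cne].
  move: h; rewrite ce h3 => h.
  apply: (@Minv_rcv _ _ _ _ _ _ _ i) => //.
  - by rewrite /is_rcv_on hop !eqxx.
  - by rewrite /is_snd_on hop.
move: h; rewrite (snd_other (e:=i)); last by rewrite (snd_ch h3).
by move=> h; apply: Minv_other; rewrite ?snd_other ?rcv_other.
Qed.

Lemma reach_node n : reachable S po cap n -> is_node S po cap n.
Proof. by case. Qed.

Lemma Inv_source : Inv (source Th Ch V) [::].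
Proof.
split.
- by [].
- by [].
- by [].
- by move=> c hc [|k].
split.
- by move=> c hc [|y s1] e s2.
- by [].
move=> c; exists [::]; rewrite /qf /=; case: ifP => _;
  by split=> //; split=> // -[|j].
Qed.

Lemma back n : reachable S po cap n -> exists s, Inv n s.
Proof.
elim=> [_|n1 n2 r [s hs] hn2 he]; first by exists [::]; exact: Inv_source.
exact: (step_inv (reach_node r) hn2 he hs).
Qed.

Lemma back_concr n : is_sink S n -> reachable S po cap n -> consistent S po cap.
Proof.
case=> hYS hIn /back [s [us hYs hidx was [sp hIs hM]]].
case: AE => uS [_ [poS [irr [tr [pth tot]]]]].
have memS x : (x \in s) = (x \in S) by rewrite -hYs hYS.
exists s; split=> //; split.
- move=> e f; rewrite /po_of !memS; apply/idP/idP.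
  + case/and4P=> eS fS ief /eqP tef.
    have nef : e != f by apply/eqP => ef; rewrite ef ltnn in ief.
    case: (tot e f eS fS nef tef) => // hfe.
    have := hidx f e; rewrite !memS => /(_ fS eS hfe) hfe'.
    by have := ltn_trans ief hfe'; rewrite ltnn.
  + move=> hef; have [eS fS] := poS e f hef.
    rewrite eS fS /= hidx ?memS //= (pth e f hef) eqxx //.
split=> //; split=> //; split.
- move=> c hc s1 e s2 hs; have [h1 h2] := sp c hc s1 e s2 hs; split=> // hsn.
  by case: (h1 hsn) => // -[_]; rewrite hIn.
move=> c i er; case: (hM c) => M [h1 [h2 h3]] /h3 [es [h4 h5]].
exists es; split=> //; rewrite h1 onth_cat.
have -> : i < size M by rewrite -onthTE h4.
by [].
Qed.
End Back.

Lemma filt_before (T : eqType) (P : pred T) (s0 A B : seq T) (e x : T) :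
  uniq s0 -> filter P s0 = A ++ e :: B -> x \in A -> index x s0 < index e s0.
Proof.
elim: s0 A => [|y t IH] A /=; first by case: A.
case/andP=> yt ut.
have sub z : z \in filter P t -> y != z.
  by rewrite mem_filter => /andP[_ zt]; apply/eqP => yz; rewrite yz zt in yt.
case: ifP => Py.
  case: A => [|a A] /= [ya hf].
    by [].
  have ey : y != e by apply: sub; rewrite hf mem_cat inE eqxx orbT.
  rewrite inE (negbTE ey) => /orP [/eqP xa|xA].
    by rewrite xa -ya eqxx.
  have yx : y != x by apply: sub; rewrite hf mem_cat xA.
  by rewrite (negbTE yx) ltnS; exact: (IH A ut hf xA).
move=> hf xA.
have ey : y != e by apply: sub; rewrite hf mem_cat inE eqxx orbT.
have yx : y != x by apply: sub; rewrite hf mem_cat xA.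
by rewrite (negbTE ey) (negbTE yx) ltnS; exact: (IH A ut hf xA).
Qed.

Section Fwd.
Variables Th Ch V : eqType.
Local Notation E := (event Th Ch V).
Local Notation node := (node Th Ch V).
Variables (S : seq E) (po : rel E) (cap : Ch -> nat) (s : seq E).
Hypothesis AE : abstract_execution S po.
Hypothesis Hc : concretizes S po cap s.

Definition Ip (p : seq E) : option E :=
  if rev p is x :: _ then (if (ev_op x == Snd) && sync cap (ev_ch x) then Some x else None)
  else None.

Definition Qp (p : seq E) c : seq E :=
  if async cap c then drop (count (is_rcv_on c) p) (filter (is_snd_on c) p) else [::].

Lemma Ip_rcons p x : Ip (rcons p x) =
  if (ev_op x == Snd) && sync cap (ev_ch x) then Some x else None.
Proof. by rewrite /Ip rev_rcons. Qed.

Lemma Ip_Some p i : Ip p = Some i ->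
  exists p0, [/\ p = rcons p0 i, ev_op i = Snd & sync cap (ev_ch i)].
Proof.
case/lastP: p => [|p0 x] //; rewrite Ip_rcons.
case: ifP => // /andP[/eqP h1 h2] [<-]; by exists p0.
Qed.

Lemma Fnext p x q i : s = p ++ x :: q -> Ip p = Some i ->
  is_rcv_on (ev_ch i) x /\ ev_thr x != ev_thr i.
Proof.
move=> hs /Ip_Some [p0 [hp hop hsy]].
case: Hc => _ [_ [_ [_ [ws _]]]].
have := ws (ev_ch i) hsy p0 i (x :: q); rewrite hs hp cat_rcons => /(_ erefl) [h1 _].
have : is_snd_on (ev_ch i) i by rewrite /is_snd_on hop !eqxx.
by move/h1 => [f [s3 [[-> _] [h2 h3]]]].
Qed.

Lemma Fsync p q : s = p ++ q -> forall c, sync cap c ->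
  count (is_snd_on c) p =
  count (is_rcv_on c) p + (if Ip p is Some x then is_snd_on c x else false).
Proof.
elim/last_ind: p q => [|p x IH] q hs c hc; first by [].
have hs' : s = p ++ x :: q by rewrite hs cat_rcons.
have := IH _ hs' c hc.
rewrite -!cats1 !count_cat /= cats1 Ip_rcons !addn0.
case E1: (Ip p) => [i|] IHc.
  have [hr _] := Fnext hs' E1.
  have [p0 [_ hopi _]] := Ip_Some E1.
  rewrite /is_rcv_on in hr; case/andP: hr => /eqP hop /eqP hch.
  rewrite /is_snd_on /is_rcv_on hop /= addn0 IHc /is_snd_on hopi hch /=.
  by rewrite addn0.
rewrite addn0 in IHc; rewrite IHc /is_snd_on /is_rcv_on.
case: (eqVneq (ev_ch x) c) => [ce|cne].
  rewrite ce hc andbT; case hop: (ev_op x) => /=.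
    by rewrite hop ce !eqxx addn0.
  case: Hc => _ [_ [_ [_ [ws _]]]].
  have := ws c hc p x q hs'; case=> _ h.
  have : is_rcv_on c x by rewrite /is_rcv_on hop ce !eqxx.
  move/h => [s0 [f [hp [hf _]]]].
  move: E1; rewrite hp Ip_rcons.
  case/andP: hf => -> /eqP ->; by rewrite hc.
rewrite !andbF /= !addn0.
case: ifP => _ //; by rewrite /= ?(negbTE cne) ?andbF ?addn0.
Qed.


Lemma Hc_parts : [/\ (forall e, (e \in s) = (e \in S)), (forall e f, po_of s e f = po e f),
  uniq s & [/\ wf_async cap s, wf_sync cap s & wf_values s]].
Proof. by case: Hc => h1 [h2 [h3 [h4 [h5 h6]]]]. Qed.

Lemma pre_facts p q : s = p ++ q ->
  [/\ uniq p, {subset p <= S}, take (size p) s = p & forall x, x \in p -> index x s = index x p].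
Proof.
move=> hs; case: Hc_parts => memS _ us _.
have up : uniq p by move: us; rewrite hs cat_uniq => /and3P[].
split=> //.
- by move=> x xp; rewrite -memS hs mem_cat xp.
- by rewrite hs take_size_cat.
- by move=> x xp; rewrite hs index_cat xp.
Qed.

Lemma Qcount p q c e : s = p ++ q -> e \in Qp p c ->
  count (fun x => [&& x \in p, is_snd_on c x, ev_thr x == ev_thr e & po e x]) S
  < size (Qp p c).
Proof.
move=> hs; rewrite /Qp; case: ifP => // hac he.
have [up subp tk idx] := pre_facts hs.
have uS : uniq S by case: AE.
case: Hc_parts => memS pos us _.
set L := filter (is_snd_on c) p; set r := count (is_rcv_on c) p.
apply: (@leq_ltn_trans (count (po e) L)).
  apply: (@leq_trans (count (fun x => (x \in p) && (is_snd_on c x && po e x)) S)).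
    by apply: sub_count => x /and4P[-> -> _ ->].
  rewrite (@count_S _ _ _ S p (fun x => x \in p)) // /L count_filter.
  by apply: eq_leq; apply: eq_count => x /=; rewrite andbC.
have [B1 [B2 hB]] : exists B1 B2, drop r L = B1 ++ e :: B2.
  by case/splitPr: he => B1 B2; exists B1, B2.
have hL : L = (take r L ++ B1) ++ e :: B2 by rewrite -catA -hB cat_take_drop.
have ep : e \in p.
  have : e \in L by rewrite hL mem_cat inE eqxx orbT.
  by rewrite /L mem_filter => /andP[].
rewrite hB {1}hL count_cat /=.
have -> : count (po e) (take r L ++ B1) = 0.
  rewrite (@eq_in_count _ _ pred0) ?count_pred0 // => x xA /=.
  have xp : x \in p.
    have : x \in L by rewrite hL mem_cat xA.
    by rewrite /L mem_filter => /andP[].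
  have hb := filt_before up hL xA.
  apply/negbTE/negP => hex; move: hex; rewrite -pos => /and4P[_ _ hlt _].
  rewrite (idx _ xp) (idx _ ep) in hlt.
  by move: (ltn_trans hb hlt); rewrite ltnn.
have -> : po e e = false by case: AE => _ [_ [_ [irr _]]]; apply/negbTE.
rewrite size_cat /= add0n add0n.
by apply: (leq_ltn_trans (count_size _ _)); lia.
Qed.

Lemma node_ok p q (n : node) : s = p ++ q -> (forall x, nY n x = (x \in p)) ->
  (forall c, nQ n c = Qp p c) -> nI n = Ip p -> is_node S po cap n.
Proof.
move=> hs hY hQ hI.
have [up subp tk idx] := pre_facts hs.
have uS : uniq S by case: AE.
case: Hc_parts => memS pos us [was wss wvs].
have cS c : cnt_snd S (nY n) c = count (is_snd_on c) p.
  by rewrite /cnt_snd (@count_S _ _ _ S p (nY n)).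
have cR c : cnt_rcv S (nY n) c = count (is_rcv_on c) p.
  by rewrite /cnt_rcv (@count_S _ _ _ S p (nY n)).
have FS := Fsync hs.
split; [|split;[|split;[|split;[|split;[|split;[|split]]]]]].
- by move=> x; rewrite hY; apply: subp.
- move=> e f; rewrite !hY => fp hef.
  have := pos e f; rewrite hef => /and4P[es fs hlt _].
  rewrite -tk in fp; rewrite -tk in_take //; rewrite in_take // in fp.
  exact: ltn_trans hlt fp.
- move=> c1 c2 h1 h2; rewrite !cS !cR (FS _ h1) (FS _ h2).
  case: (Ip p) => [i|]; last by rewrite !addn0.
  case i1: (is_snd_on c1 i); last by rewrite addn0.
  case i2: (is_snd_on c2 i); last by rewrite addn0.
  by rewrite -(snd_ch i1) -(snd_ch i2).
- move=> c hc; rewrite cS cR (FS _ hc).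
  case: (Ip p) => [i|]; last by left; rewrite addn0.
  case: (is_snd_on c i); last by left; rewrite addn0.
  by right; rewrite addn1.
- by move=> c hc; rewrite cS cR; have := was c hc (size p); rewrite /= tk.
- by move=> c hc; rewrite hQ /Qp async_sync hc.
- move=> c hc; rewrite hQ; split.
    rewrite /Qp hc size_drop size_filter; have := was c hc (size p); rewrite /= tk.
    by lia.
  move=> e he; split.
  + rewrite hY; move: he; rewrite /Qp hc => /mem_drop; rewrite mem_filter.
    by case/andP.
  + move: he; rewrite /Qp hc => /mem_drop; rewrite mem_filter.
    by case/andP.
  + rewrite (@eq_count _ _ (fun x => [&& x \in p, is_snd_on c x, ev_thr x == ev_thr e & po e x])).
      exact: Qcount hs he.
    by move=> x; rewrite hY.
rewrite hI; case E1: (Ip p) => [i|].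
  have [p0 [_ hop hsy]] := Ip_Some E1.
  have hsi : is_snd_on (ev_ch i) i by rewrite /is_snd_on hop !eqxx.
  exists (ev_ch i); split=> //.
  rewrite cS cR (FS _ hsy) E1 hsi; lia.
by move=> c hc; rewrite cS cR (FS _ hc) E1 addn0.
Qed.

Lemma cnt_rcons (P : pred E) p x : count P (rcons p x) = count P p + P x.
Proof. by rewrite -cats1 count_cat /= addn0. Qed.

Lemma edge_ok p x q (n1 : node) : s = p ++ x :: q -> (forall y, nY n1 y = (y \in p)) ->
  (forall c, nQ n1 c = Qp p c) -> nI n1 = Ip p ->
  edge S cap n1 (Node (fun y => y \in rcons p x) (Qp (rcons p x)) (Ip (rcons p x))).
Proof.
move=> hs hY1 hQ1 hI1.
case: Hc_parts => memS pos us [was wss wvs].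
have hs' : s = rcons p x ++ q by rewrite cat_rcons.
have [_ _ tk' _] := pre_facts hs'.
have [_ _ tk _] := pre_facts hs.
have xS : x \in S by rewrite -memS hs mem_cat inE eqxx orbT.
have xp : x \notin p.
  by move: us; rewrite hs cat_uniq => /and3P[_ /hasPn /(_ x (mem_head _ _))].
have I1None : (ev_op x = Snd \/ ~~ sync cap (ev_ch x)) -> Ip p = None.
  case E1: (Ip p) => [i|] // h.
  have [hr _] := Fnext hs E1; have [_ [_ _ hsy]] := Ip_Some E1.
  case: h => [|]; first by rewrite (rcv_op hr).
  by rewrite (rcv_ch hr) hsy.
have Qoth c : c != ev_ch x -> Qp (rcons p x) c = Qp p c.
  by move=> cne; rewrite /Qp filter_rcons snd_other // cnt_rcons rcv_other // addn0.
have wv c : async cap c -> count (is_rcv_on c) (rcons p x) <= count (is_snd_on c) (rcons p x)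
     <= count (is_rcv_on c) (rcons p x) + cap c.
  by move=> hc; have := was c hc (size (rcons p x)); rewrite /= tk'.
have wv0 c : async cap c -> count (is_rcv_on c) p <= count (is_snd_on c) p
     <= count (is_rcv_on c) p + cap c.
  by move=> hc; have := was c hc (size p); rewrite /= tk.
exists x; split=> //; first by rewrite hY1.
  by move=> y; rewrite /= mem_rcons in_cons hY1 orbC.
rewrite /=; case hop: (ev_op x); rewrite async_sync; case hsx: (sync cap (ev_ch x)) => /=.
- split.
  + by rewrite hI1 I1None //; left.
  + by rewrite Ip_rcons hop hsx.
  + move=> c'; rewrite hQ1; case: (eqVneq c' (ev_ch x)) => [ce|cne].
      by rewrite /Qp async_sync ce hsx.
    by rewrite Qoth.
- have hac : async cap (ev_ch x) by rewrite async_sync hsx.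
  have hsn : is_snd_on (ev_ch x) x by rewrite /is_snd_on hop !eqxx.
  have hrn : is_rcv_on (ev_ch x) x = false by rewrite /is_rcv_on hop.
  split.
  + by rewrite hI1 I1None //; left.
  + by rewrite Ip_rcons hop hsx.
  + rewrite hQ1 /Qp hac size_drop size_filter.
    have := wv _ hac; have := wv0 _ hac; rewrite !cnt_rcons hsn hrn; lia.
  + rewrite hQ1 /Qp hac filter_rcons hsn cnt_rcons hrn addn0 drop_rcons //.
    by rewrite size_filter; have := wv0 _ hac; case/andP.
  + by move=> c' _ cne; rewrite hQ1 Qoth.
- have hrn : is_rcv_on (ev_ch x) x by rewrite /is_rcv_on hop !eqxx.
  have [_ h] := wss (ev_ch x) hsx p x q hs.
  have [s0 [f [hp [hf hthr]]]] := h hrn.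
  have hIp : Ip p = Some f.
    by rewrite hp Ip_rcons (snd_op hf) (snd_ch hf) hsx.
  split; last split.
  + exists f; split=> //; first by rewrite hI1.
    have FS := Fsync hs hsx; rewrite hIp hf in FS.
    set r := count (is_rcv_on (ev_ch x)) p.
    have hr : onth (filter (is_rcv_on (ev_ch x)) s) r = Some x.
      by rewrite hs filter_cat /= hrn onth_cat size_filter ltnn subnn.
    have [es [hes hv]] := wvs _ _ _ hr.
    move: hes; rewrite hs hp cat_rcons filter_cat /= hf onth_cat size_filter.
    have -> : count (is_snd_on (ev_ch x)) s0 = r.
      move: FS; rewrite {1}hp cnt_rcons hf -/r => FS; lia.
    by rewrite ltnn subnn => -[->].
  + by rewrite Ip_rcons hop.
  + move=> c'; rewrite hQ1; case: (eqVneq c' (ev_ch x)) => [ce|cne].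
      by rewrite /Qp async_sync ce hsx.
    by rewrite Qoth.
- have hac : async cap (ev_ch x) by rewrite async_sync hsx.
  have hrn : is_rcv_on (ev_ch x) x by rewrite /is_rcv_on hop !eqxx.
  have hsn : is_snd_on (ev_ch x) x = false by rewrite /is_snd_on hop.
  set r := count (is_rcv_on (ev_ch x)) p.
  set L := filter (is_snd_on (ev_ch x)) p.
  have rL : r < size L.
    rewrite /L size_filter; have := wv _ hac; rewrite !cnt_rcons hsn hrn -/r; lia.
  split.
  + by rewrite hI1 I1None //; right; rewrite hsx.
  + by rewrite Ip_rcons hop.
  + exists (nth x L r); split.
      rewrite hQ1 /Qp hac -/r -/L (drop_nth x rL) /L filter_rcons hsn cnt_rcons hrn -/r.
      by rewrite addn1.
    have hr : onth (filter (is_rcv_on (ev_ch x)) s) r = Some x.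
      by rewrite hs filter_cat /= hrn onth_cat size_filter ltnn subnn.
    have [es [hes hv]] := wvs _ _ _ hr.
    move: hes; rewrite hs filter_cat onth_cat -/L rL => hes.
    by rewrite (@onth_nth _ x es L r hes).
  + by move=> c' _ cne; rewrite hQ1 Qoth.
Qed.

Lemma fwd_chain p q : s = p ++ q -> exists n : node,
  [/\ (forall x, nY n x = (x \in p)), (forall c, nQ n c = Qp p c), nI n = Ip p &
      reachable S po cap n].
Proof.
elim/last_ind: p q => [|p x IH] q hs.
  have hQ c : nQ (source Th Ch V) c = Qp [::] c by rewrite /Qp /=; case: ifP.
  exists (source Th Ch V); split=> //.
  by apply: reach_src; apply: (node_ok hs) => //.
have hs' : s = p ++ x :: q by rewrite hs cat_rcons.
have [n1 [hY1 hQ1 hI1 r1]] := IH _ hs'.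
exists (Node (fun y => y \in rcons p x) (Qp (rcons p x)) (Ip (rcons p x))); split=> //.
apply: (reach_step r1); first exact: (node_ok hs).
exact: (edge_ok hs').
Qed.

Lemma fwd : exists n, is_sink S n /\ reachable S po cap n.
Proof.
case: Hc_parts => memS pos us [was wss wvs].
have [n [hY hQ hI r]] := fwd_chain (esym (cats0 s)).
exists n; split=> //; split; first by move=> x; rewrite hY memS.
rewrite hI; case E1: (Ip s) => [i|] //.
have [s0 [hp hop hsy]] := Ip_Some E1.
have hsc : s = s0 ++ i :: [::] by rewrite cats1.
have [h _] := wss (ev_ch i) hsy s0 i [::] hsc.
have : is_snd_on (ev_ch i) i by rewrite /is_snd_on hop !eqxx.
by move/h => [f [s3 [//]]].
Qed.
End Fwd.

Theorem mainTheorem9 (Th Ch V : eqType) (S : seq (event Th Ch V))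
  (po : rel (event Th Ch V)) (cap : Ch -> nat) :
  abstract_execution S po ->
  (consistent S po cap <->
   exists n : node Th Ch V, is_sink S n /\ reachable S po cap n).
Proof.
move=> AE; split.
  by case=> s Hc; exact: (fwd AE Hc).
by case=> n [hs hr]; exact: (back_concr AE hs hr).
Qed.
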